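(* Let $N,K,T$ be positive integers, $\mathcal{N}=\{1,\dots,N\}$, $\mathcal{K}=\{1,\dots,K\}$, $\mathcal{T}=\{1,\dots,T\}$. For each $(n,k,t)\in\mathcal{N}\times\mathcal{K}\times\mathcal{T}$ let $h_n[k,t]$ be a random variable with Gamma distribution of shape $\kappa_n[k,t]>0$ and scale $g_n[k,t]/\kappa_n[k,t]$, where $g_n[k,t]>0$. Let $\delta^2>0$, $\bar p>0$, $\bar\upsilon>0$, let $\bar\tau$ be a positive integer, and let $\varepsilon_\theta$ be a positive integer. A policy $\boldsymbol{\pi}=(\boldsymbol{\mathcal{A}},\boldsymbol{\mathcal{P}})$ consists of $a_n[k,t]\in\{0,1\}$ and $p_n[k,t]\ge 0$ for all $(n,k,t)$ such that $\sum_{n\in\mathcal{N}}a_n[k,t]\le 1$ for all $k,t$ and $\sum_{n\in\mathcal{N}}\sum_{k\in\mathcal{K}}p_n[k,t]\le\bar p$ for all $t$. Put $c_n[k,t]=\log_2\!\big(1+p_n[k,t]h_n[k,t]/\delta^2\big)$, $\upsilon(t',t'')=\sum_{n\in\mathcal{N}}\sum_{k\in\mathcal{K}}\sum_{t=t'}^{t''-1}c_n[k,t]a_n[k,t]$, $\theta(\boldsymbol{\pi})=\max_{n\in\mathcal{N},t\in\mathcal{T}}\sum_{k\in\mathcal{K}}a_n[k,t]$ and $E(\boldsymbol{\pi})=\sum_{n,k,t}a_n[k,t]p_n[k,t]$. A sampling sequence is $\mathbf{t}=(t_1,\dots,t_I)$ (with $I$ a free positive integer) together with $t_0=1$ and $t_{I+1}=T+1$,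 such that $t_0<t_1<\dots<t_I\le T$ and $1\le t_{i+1}-t_i\le\bar\tau$ for all $i\in\mathcal{I}=\{0,1,\dots,I\}$; let $\Upsilon$ be the set of such sequences. Consider $$\mathscr{P}3:\ \min_{\boldsymbol{\mathcal{A}},\boldsymbol{\mathcal{P}},\mathbf{t}}\ E(\boldsymbol{\pi})\ \text{ s.t. }\ \mathbb{E}\{\upsilon(t_i,t_{i+1})\}\ge\bar\upsilon\ \forall i\in\mathcal{I},\ \ \theta(\boldsymbol{\pi})\le\varepsilon_\theta,\ \ \boldsymbol{\pi}\text{ a policy},\ \mathbf{t}\in\Upsilon,$$ where the expectation is over the channels $h_n[k,t]$. For integers $1\le t'<t''\le T+1$ let $\mathcal{T}(t',t'')=\{t',\dots,t''-1\}$ and let $E^*(t',t'')$ be the optimal value (equal to $+\infty$ if infeasible) of the inner problem $$\mathscr{P}\text{3-2}:\ \min\ \sum_{n\in\mathcal{N},k\in\mathcal{K},t\in\mathcal{T}(t',t'')}a_n[k,t]p_n[k,t]$$ over $a_n[k,t]\in\{0,1\}$, $p_n[k,t]\ge0$ for $t\in\mathcal{T}(t',t'')$, subject to $\mathbb{E}\{\upsilon(t',t'')\}\ge\bar\upsilon$, $\sum_{k}a_n[k,t]\le\varepsilon_\theta$ for all $n$ and $t\in\mathcal{T}(t',t'')$, $\sum_n a_n[k,t]\le 1$ for all $k$ and $t\in\mathcal{T}(t',t'')$, and $\sum_{n,k}p_n[k,t]\le\bar p$ for all $t\in\mathcal{T}(t',t'')$. Then $\mathscr{P}3$ is equivalent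 to the outer problem $$\mathscr{P}\text{3-1}:\ \min_{\mathbf{t}\in\Upsilon}\ \sum_{i\in\mathcal{I}}E^*(t_i,t_{i+1}),$$ i.e., the optimal values coincide, and an optimal solution of $\mathscr{P}3$ is obtained from an optimal $\mathbf{t}$ of $\mathscr{P}\text{3-1}$ together with optimal solutions of $\mathscr{P}\text{3-2}$ on each interval $\mathcal{T}(t_i,t_{i+1})$.
   Context: This models a UAV sending status updates to $N$ base stations over $K$ resource blocks and $T$ slots; $a_n[k,t]$ indicates that resource block $k$ in slot $t$ is used for the link to base station $n$, $p_n[k,t]$ is the transmit power. *)

(* Defs.v *)
From HB Require Import structures.
From mathcomp Require Import all_boot all_order all_algebra.
From mathcomp Require Import all_classical all_reals all_analysis.
Set Implicit Arguments. Unset Strict Implicit. Unset Printing Implicit Defensive.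
Import Order.TTheory GRing.Theory Num.Theory.
Import numFieldNormedType.Exports.
Local Open Scope classical_set_scope.
Local Open Scope ring_scope.

Definition gammaR (R : realType) (k : R) : R :=
  fine (\int[@lebesgue_measure R]_(x in `]0%R, +oo[)
          ((x `^ (k - 1)) * expR (- x))%:E)%E.

Definition gamma_pdf (R : realType) (k s : R) (x : R) : R :=
  if 0 < x then x `^ (k - 1) * expR (- x / s) / (gammaR k * s `^ k) else 0.

Definition gamma_distributed (R : realType) (d : measure_display)
  (Omega : measurableType d) (P : probability Omega R) (X : {RV P >-> R})
  (k s : R) : Prop :=
  forall A : set R, measurable A ->
    P (X @^-1` A) = (\int[@lebesgue_measure R]_(x in A) (gamma_pdf k s x)%:E)%E.

Section P3.
Variables (R : realType) (d : measure_display) (Omega : measurableType d)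
  (P : probability Omega R) (N K T : nat).

Notation alloc := ('I_N -> 'I_K -> 'I_T -> bool).
Notation power := ('I_N -> 'I_K -> 'I_T -> R).
Notation chan := ('I_N -> 'I_K -> 'I_T -> {RV P >-> R}).

(* Convention: the ordinal t : 'I_T stands for time slot t+1 in {1,...,T};
   t' <= t.+1 < t'' means slot t+1 lies in T(t',t'') = {t',...,t''-1}. *)
Definition in_slots (t1 t2 : nat) (t : 'I_T) : bool := (t1 <= t.+1 < t2)%N.

Definition capa (delta2 : R) (p : power) (h : chan) n k t (w : Omega) : R :=
  ln (1 + p n k t * h n k t w / delta2) / ln 2.

Definition upsilon (delta2 : R) (a : alloc) (p : power) (h : chan)
  (t1 t2 : nat) (w : Omega) : R :=
  \sum_(n < N) \sum_(k < K) \sum_(t < T | in_slots t1 t2 t)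
     capa delta2 p h n k t w * (a n k t)%:R.

Definition Eupsilon (delta2 : R) (a : alloc) (p : power) (h : chan)
  (t1 t2 : nat) : \bar R :=
  (\int[P]_w (upsilon delta2 a p h t1 t2 w)%:E)%E.

Definition theta (a : alloc) : nat :=
  \max_(n < N) \max_(t < T) \sum_(k < K) (a n k t : nat).

Definition energy (a : alloc) (p : power) : R :=
  \sum_(n < N) \sum_(k < K) \sum_(t < T) (a n k t)%:R * p n k t.

Definition is_policy (pbar : R) (a : alloc) (p : power) : Prop :=
  (forall n k t, 0 <= p n k t) /\
  (forall k t, (\sum_(n < N) (a n k t : nat) <= 1)%N) /\
  (forall t, \sum_(n < N) \sum_(k < K) p n k t <= pbar).

Definition in_Upsilon (taubar : nat) (I : nat) (ts : nat -> nat) : Prop :=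
  (0 < I)%N /\ ts 0%N = 1%N /\ ts I.+1 = T.+1 /\
  forall i, (i <= I)%N -> (ts i < ts i.+1 <= ts i + taubar)%N.

Definition P3_feasible (delta2 pbar ubar : R) (taubar eps : nat) (h : chan)
  (a : alloc) (p : power) (I : nat) (ts : nat -> nat) : Prop :=
  [/\ forall i, (i <= I)%N -> (ubar%:E <= Eupsilon delta2 a p h (ts i) (ts i.+1))%E,
      (theta a <= eps)%N,
      is_policy pbar a p &
      in_Upsilon taubar I ts].

Definition P3_value (delta2 pbar ubar : R) (taubar eps : nat) (h : chan)
  : \bar R :=
  ereal_inf [set e | exists a p I ts,
    P3_feasible delta2 pbar ubar taubar eps h a p I ts /\ e = (energy a p)%:E].

Definition energy_on (t1 t2 : nat) (a : alloc) (p : power) : R :=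
  \sum_(n < N) \sum_(k < K) \sum_(t < T | in_slots t1 t2 t) (a n k t)%:R * p n k t.

(* feasibility for the inner problem P3-2 on T(t',t''); only the variables with
   t in T(t',t'') matter *)
Definition P32_feasible (delta2 pbar ubar : R) (eps : nat) (h : chan)
  (t1 t2 : nat) (a : alloc) (p : power) : Prop :=
  [/\ forall n k t, in_slots t1 t2 t -> 0 <= p n k t,
      (ubar%:E <= Eupsilon delta2 a p h t1 t2)%E,
      forall n t, in_slots t1 t2 t -> (\sum_(k < K) (a n k t : nat) <= eps)%N,
      forall k t, in_slots t1 t2 t -> (\sum_(n < N) (a n k t : nat) <= 1)%N &
      forall t, in_slots t1 t2 t -> \sum_(n < N) \sum_(k < K) p n k t <= pbar].

Definition Estar (delta2 pbar ubar : R) (eps : nat) (h : chan) (t1 t2 : nat)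
  : \bar R :=
  ereal_inf [set e | exists a p,
    P32_feasible delta2 pbar ubar eps h t1 t2 a p /\ e = (energy_on t1 t2 a p)%:E].

Definition P31_objective (delta2 pbar ubar : R) (eps : nat) (h : chan)
  (I : nat) (ts : nat -> nat) : \bar R :=
  (\sum_(i < I.+1) Estar delta2 pbar ubar eps h (ts i) (ts i.+1))%E.

Definition P31_value (delta2 pbar ubar : R) (taubar eps : nat) (h : chan)
  : \bar R :=
  ereal_inf [set e | exists I ts,
    in_Upsilon taubar I ts /\ e = P31_objective delta2 pbar ubar eps h I ts].

Definition glue_alloc (I : nat) (ts : nat -> nat) (sa : nat -> alloc) : alloc :=
  fun n k t => [exists i : 'I_I.+1, in_slots (ts i) (ts i.+1) t && sa i n k t].

Definition glue_power (I : nat) (ts : nat -> nat) (sp : nat -> power) : power :=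
  fun n k t => \sum_(i < I.+1) (if in_slots (ts i) (ts i.+1) t then sp i n k t else 0).

End P3.

(* Main.v *)
Require Import Defs.
From HB Require Import structures.
From mathcomp Require Import all_boot all_order all_algebra.
From mathcomp Require Import all_classical all_reals all_analysis.
From mathcomp Require Import zify.
Import Order.TTheory GRing.Theory Num.Theory.
Local Open Scope classical_set_scope.
Local Open Scope ring_scope.

Lemma ts_mono (I : nat) (ts : nat -> nat) :
  (forall i, (i <= I)%N -> (ts i < ts i.+1)%N) ->
  forall i j, (i < j)%N -> (j <= I.+1)%N -> (ts i.+1 <= ts j)%N.
Proof.
move=> H i; elim=> [//|j IH] lt jle.
rewrite ltnS leq_eqVlt in lt; case/orP: lt => [/eqP->//|lt].
apply: leq_trans (IH lt (ltnW jle)) _; apply: ltnW; apply: H; by [].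
Qed.

Lemma slot_exists (ts : nat -> nat) x : (ts 0 <= x)%N -> forall m, (x < ts m)%N ->
  exists2 i, (i < m)%N & (ts i <= x < ts i.+1)%N.
Proof.
move=> H0; elim=> [|m IH] xlt; first by rewrite ltnNge H0 in xlt.
case: (ltnP x (ts m)) => h.
  by have [i im hi] := IH h; exists i => //; rewrite ltnS ltnW.
by exists m => //; rewrite h xlt.
Qed.

Lemma slot_unique (T taubar I : nat) (ts : nat -> nat) :
  in_Upsilon T taubar I ts -> forall t : 'I_T,
  exists i0 : 'I_I.+1, in_slots (ts i0) (ts i0.+1) t /\
    forall i : 'I_I.+1, in_slots (ts i) (ts i.+1) t -> i = i0.
Proof.
move=> [_ [h0 [hI hs]]] t.
have mono : forall i, (i <= I)%N -> (ts i < ts i.+1)%N.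
  by move=> i /hs /andP[].
have [i ilt hi] : exists2 i, (i < I.+1)%N & (ts i <= t.+1 < ts i.+1)%N.
  by apply: slot_exists; rewrite ?h0 ?hI // ltnS ltn_ord.
exists (Ordinal ilt); split => // j hj; apply: val_inj => /=.
rewrite /in_slots in hj.
case: (ltngtP (nat_of_ord j) i) => // c.
  have := @ts_mono I ts mono _ _ c (ltnW ilt).
  move/andP: hi => [hi1 hi2]; move/andP: hj => [hj1 hj2]. lia.
have := @ts_mono I ts mono _ _ c (ltnW (ltn_ord j)).
move/andP: hi => [hi1 hi2]; move/andP: hj => [hj1 hj2]. lia.
Qed.

Arguments slot_unique {T taubar I ts}.

Lemma sum_partition (V : nmodType) (T taubar I : nat) (ts : nat -> nat) (f : 'I_T -> V) :
  in_Upsilon T taubar I ts ->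
  \sum_(t < T) f t = \sum_(i < I.+1) \sum_(t < T | in_slots (ts i) (ts i.+1) t) f t.
Proof.
move=> HU.
under [RHS]eq_bigr do rewrite big_mkcond.
rewrite exchange_big /=; apply: eq_bigr => t _.
have [i0 [Hi0 Hu]] := slot_unique HU t.
rewrite (bigD1 i0) //= Hi0 big1 ?addr0 // => j Hj.
case: ifP => // /Hu Hj'; by rewrite Hj' eqxx in Hj.
Qed.

Lemma glue_alloc_at (N K T taubar I : nat) (ts : nat -> nat)
  (sa : nat -> 'I_N -> 'I_K -> 'I_T -> bool) (i : 'I_I.+1) n k t :
  in_Upsilon T taubar I ts -> in_slots (ts i) (ts i.+1) t ->
  glue_alloc I ts sa n k t = sa i n k t.
Proof.
move=> HU hi; have [i0 [H0 Hu]] := slot_unique HU t.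
have ei := Hu _ hi; subst i0.
rewrite /glue_alloc; apply/existsP/idP.
  by case=> j /andP[hj sj]; rewrite -(Hu _ hj).
by move=> s; exists i; rewrite hi s.
Qed.

Arguments glue_alloc_at {N K T taubar I ts} sa i n k {t}.

Lemma glue_power_at (R : realType) (N K T taubar I : nat) (ts : nat -> nat)
  (sp : nat -> 'I_N -> 'I_K -> 'I_T -> R) (i : 'I_I.+1) n k t :
  in_Upsilon T taubar I ts -> in_slots (ts i) (ts i.+1) t ->
  glue_power I ts sp n k t = sp i n k t.
Proof.
move=> HU hi; have [i0 [H0 Hu]] := slot_unique HU t.
have ei := Hu _ hi; subst i0.
rewrite /glue_power (bigD1 i) //= hi big1 ?addr0 // => j hj.
case: ifP => // /Hu ej; by rewrite ej eqxx in hj.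
Qed.

Arguments glue_power_at {R N K T taubar I ts} sp i n k {t}.

Lemma energy_split (R : realType) (N K T taubar I : nat) (ts : nat -> nat)
  (a : 'I_N -> 'I_K -> 'I_T -> bool) (p : 'I_N -> 'I_K -> 'I_T -> R) :
  in_Upsilon T taubar I ts ->
  energy a p = \sum_(i < I.+1) energy_on (ts i) (ts i.+1) a p.
Proof.
move=> HU; rewrite /energy /energy_on.
rewrite [RHS]exchange_big; apply: eq_bigr => n _.
rewrite [RHS]exchange_big; apply: eq_bigr => k _.
exact: sum_partition HU.
Qed.

Arguments energy_split {R N K T taubar I ts}.

Lemma glue_energy (R : realType) (N K T taubar I : nat) (ts : nat -> nat)
  (sa : nat -> 'I_N -> 'I_K -> 'I_T -> bool) (sp : nat -> 'I_N -> 'I_K -> 'I_T -> R) :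
  in_Upsilon T taubar I ts ->
  energy (glue_alloc I ts sa) (glue_power I ts sp)
  = \sum_(i < I.+1) energy_on (ts i) (ts i.+1) (sa i) (sp i).
Proof.
move=> HU; rewrite (energy_split _ _ HU); apply: eq_bigr => i _.
rewrite /energy_on; apply: eq_bigr => n _; apply: eq_bigr => k _.
apply: eq_bigr => t ht.
by rewrite (glue_alloc_at _ _ _ _ HU ht) (glue_power_at _ _ _ _ HU ht).
Qed.

Arguments glue_energy {R N K T taubar I ts}.

Lemma glue_feasible (R : realType) (d : measure_display) (Omega : measurableType d)
  (P : probability Omega R) (N K T : nat)
  (h : 'I_N -> 'I_K -> 'I_T -> {RV P >-> R})
  (delta2 pbar ubar : R) (taubar eps : nat) I ts
  (sa : nat -> 'I_N -> 'I_K -> 'I_T -> bool) (sp : nat -> 'I_N -> 'I_K -> 'I_T -> R) :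
  in_Upsilon T taubar I ts ->
  (forall i, (i <= I)%N -> P32_feasible delta2 pbar ubar eps h (ts i) (ts i.+1) (sa i) (sp i)) ->
  P3_feasible delta2 pbar ubar taubar eps h (glue_alloc I ts sa) (glue_power I ts sp) I ts.
Proof.
move=> HU Hf; split => //.
- move=> i iI; have [_ HE _ _ _] := Hf i iI.
  suff -> : Eupsilon delta2 (glue_alloc I ts sa) (glue_power I ts sp) h (ts i) (ts i.+1)
    = Eupsilon delta2 (sa i) (sp i) h (ts i) (ts i.+1) by [].
  rewrite /Eupsilon /upsilon; congr integral; apply: funext => w; congr EFin.
  apply: eq_bigr => n _; apply: eq_bigr => k _; apply: eq_bigr => t ht.
  have := (glue_alloc_at sa (Ordinal (iI : (i < I.+1)%N)) n k HU ht).
  have := (glue_power_at sp (Ordinal (iI : (i < I.+1)%N)) n k HU ht).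
  by rewrite /capa /= => -> ->.
- rewrite /theta; apply/bigmax_leqP => n _; apply/bigmax_leqP => t _.
  have [i0 [H0 _]] := slot_unique HU t.
  have [_ _ F3 _ _] := Hf i0 (ltn_ord i0).
  under eq_bigr => k _ do rewrite (glue_alloc_at sa i0 n k HU H0).
  exact: F3.
- split; [|split].
  + move=> n k t; have [i0 [H0 _]] := slot_unique HU t.
    have [F1 _ _ _ _] := Hf i0 (ltn_ord i0).
    rewrite (glue_power_at sp i0 n k HU H0); exact: F1.
  + move=> k t; have [i0 [H0 _]] := slot_unique HU t.
    have [_ _ _ F4 _] := Hf i0 (ltn_ord i0).
    under eq_bigr => n _ do rewrite (glue_alloc_at sa i0 n k HU H0).
    exact: F4.
  + move=> t; have [i0 [H0 _]] := slot_unique HU t.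
    have [_ _ _ _ F5] := Hf i0 (ltn_ord i0).
    under eq_bigr => n _ do under eq_bigr => k _ do rewrite (glue_power_at sp i0 n k HU H0).
    exact: F5.
Qed.

Lemma energy_on_ge0 (R : realType) (N K T : nat) t1 t2
  (a : 'I_N -> 'I_K -> 'I_T -> bool) (p : 'I_N -> 'I_K -> 'I_T -> R) :
  (forall n k t, in_slots t1 t2 t -> 0 <= p n k t) -> 0 <= energy_on t1 t2 a p.
Proof.
move=> Hp; rewrite /energy_on.
apply: sumr_ge0 => n _; apply: sumr_ge0 => k _; apply: sumr_ge0 => t ht.
by apply: mulr_ge0; [exact: ler0n | exact: Hp].
Qed.

Lemma Estar_ge0 (R : realType) (d : measure_display) (Omega : measurableType d)
  (P : probability Omega R) (N K T : nat)
  (h : 'I_N -> 'I_K -> 'I_T -> {RV P >-> R})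
  (delta2 pbar ubar : R) (eps : nat) t1 t2 :
  (0 <= Estar delta2 pbar ubar eps h t1 t2)%E.
Proof.
apply/ereal_infP => y [a [p [Hf ->]]]; rewrite lee_fin.
by apply: energy_on_ge0; case: Hf.
Qed.

Lemma P3_to_P32 (R : realType) (d : measure_display) (Omega : measurableType d)
  (P : probability Omega R) (N K T : nat)
  (h : 'I_N -> 'I_K -> 'I_T -> {RV P >-> R})
  (delta2 pbar ubar : R) (taubar eps : nat) a p I ts i :
  P3_feasible delta2 pbar ubar taubar eps h a p I ts -> (i <= I)%N ->
  P32_feasible delta2 pbar ubar eps h (ts i) (ts i.+1) a p.
Proof.
move=> [HE Hth [Hp [Ha Hs]] HU] iI; split.
- by move=> n k t _; exact: Hp.
- exact: HE iI.
- move=> n t _; apply: leq_trans Hth.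
  rewrite /theta.
  have h1 := @leq_bigmax _ (fun n => (\max_(t < T) \sum_(k < K) (a n k t : nat))%N) n.
  have h2 := @leq_bigmax _ (fun t => (\sum_(k < K) (a n k t : nat))%N) t.
  exact: leq_trans h2 h1.
- by move=> k t _; exact: Ha.
- by move=> t _; exact: Hs.
Qed.

Lemma value_ge (R : realType) (d : measure_display) (Omega : measurableType d)
  (P : probability Omega R) (N K T : nat)
  (h : 'I_N -> 'I_K -> 'I_T -> {RV P >-> R})
  (delta2 pbar ubar : R) (taubar eps : nat) :
  (P31_value delta2 pbar ubar taubar eps h <= P3_value delta2 pbar ubar taubar eps h)%E.
Proof.
apply/ereal_infP => y [a [p [I [ts [HF ->]]]]].
have HF' := HF; case: HF' => [_ _ _ HU].
apply: (@le_trans _ _ (P31_objective delta2 pbar ubar eps h I ts)).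
  by apply: ereal_inf_lbound; exists I, ts.
rewrite /P31_objective (energy_split _ _ HU) -sumEFin.
apply: lee_sum => i _; apply: ereal_inf_lbound; exists a, p; split => //.
exact: P3_to_P32 HF (ltn_ord i).
Qed.

Lemma value_le (R : realType) (d : measure_display) (Omega : measurableType d)
  (P : probability Omega R) (N K T : nat)
  (h : 'I_N -> 'I_K -> 'I_T -> {RV P >-> R})
  (delta2 pbar ubar : R) (taubar eps : nat) :
  (P3_value delta2 pbar ubar taubar eps h <= P31_value delta2 pbar ubar taubar eps h)%E.
Proof.
apply/ereal_infP => y [I [ts [HU ->]]].
set ES := fun i : nat => Estar delta2 pbar ubar eps h (ts i) (ts i.+1).
case: (boolp.pselect (exists i : 'I_I.+1, ES i = +oo%E)).
  case=> i0 Hi0; rewrite /P31_objective (bigD1 i0) //=.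
  rewrite [X in (X + _)%E]Hi0 addye ?leey //.
  have ge0 : (0 <= \sum_(i < I.+1 | i != i0) ES i)%E.
    by apply: sume_ge0 => i _; exact: Estar_ge0.
  by rewrite gt_eqF // (lt_le_trans ltNy0 ge0).
move=> Hnot.
have Efin : forall i : 'I_I.+1, ES i = (fine (ES i))%:E.
  move=> i; rewrite fineK // ge0_fin_numE ?Estar_ge0 // lt_neqAle leey andbT.
  by apply/negP => /eqP E; apply: Hnot; exists i.
apply/lee_addgt0Pr => e e0.
set c := e / I.+1%:R.
have c0 : 0 < c by rewrite /c divr_gt0 // ltr0n.
have : forall i : nat, exists ap : ('I_N -> 'I_K -> 'I_T -> bool) * ('I_N -> 'I_K -> 'I_T -> R),
    (i <= I)%N -> P32_feasible delta2 pbar ubar eps h (ts i) (ts i.+1) ap.1 ap.2 /\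
      energy_on (ts i) (ts i.+1) ap.1 ap.2 <= fine (ES i) + c.
  move=> i; case: (boolp.pselect (i <= I)%N) => iI; last first.
    by exists ((fun _ _ _ => false), (fun _ _ _ => 0)) => /iI.
  have Ei : ES i = (fine (ES i))%:E := Efin (Ordinal (iI : (i < I.+1)%N)).
  have fin : ES i \is a fin_num by rewrite Ei.
  have [x [a [p [Hf ->]]] Hx] := lb_ereal_inf_adherent c0 fin.
  exists (a, p) => _; split => //=.
  move: Hx; rewrite -[ereal_inf _]/(ES i) Ei -EFinD lte_fin => Hx.
  exact: ltW.
case/boolp.choice => f Hf.
pose A := glue_alloc I ts (fun i => (f i).1).
pose Pw := glue_power I ts (fun i => (f i).2).
have feas : P3_feasible delta2 pbar ubar taubar eps h A Pw I ts.
  by apply: glue_feasible => // i iI; case: (Hf i iI).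
apply: (@le_trans _ _ (energy A Pw)%:E).
  by apply: ereal_inf_lbound; exists A, Pw, I, ts.
rewrite /A /Pw (glue_energy _ _ HU).
have -> : P31_objective delta2 pbar ubar eps h I ts = (\sum_(i < I.+1) fine (ES i))%:E.
  by rewrite -sumEFin; apply: eq_bigr => i _; exact: Efin.
rewrite -EFinD lee_fin.
have -> : e = \sum_(i < I.+1) c.
  by rewrite sumr_const card_ord /c -[X in _ = X]mulr_natr divfK // pnatr_eq0.
rewrite -big_split /=; apply: ler_sum => i _.
exact: (Hf i (ltn_ord i)).2.
Qed.

Theorem theorem1 (R : realType) (d : measure_display) (Omega : measurableType d)
  (P : probability Omega R) (N K T : nat)
  (kappa g : 'I_N -> 'I_K -> 'I_T -> R)
  (h : 'I_N -> 'I_K -> 'I_T -> {RV P >-> R})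
  (delta2 pbar ubar : R) (taubar eps : nat) :
  (0 < N)%N -> (0 < K)%N -> (0 < T)%N ->
  (forall n k t, 0 < kappa n k t) -> (forall n k t, 0 < g n k t) ->
  (forall n k t, gamma_distributed (h n k t) (kappa n k t) (g n k t / kappa n k t)) ->
  0 < delta2 -> 0 < pbar -> 0 < ubar -> (0 < taubar)%N -> (0 < eps)%N ->
  P3_value delta2 pbar ubar taubar eps h = P31_value delta2 pbar ubar taubar eps h /\
  forall (I : nat) (ts : nat -> nat)
         (sa : nat -> 'I_N -> 'I_K -> 'I_T -> bool)
         (sp : nat -> 'I_N -> 'I_K -> 'I_T -> R),
    in_Upsilon T taubar I ts ->
    P31_objective delta2 pbar ubar eps h I ts = P31_value delta2 pbar ubar taubar eps h ->
    (forall i, (i <= I)%N ->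
       P32_feasible delta2 pbar ubar eps h (ts i) (ts i.+1) (sa i) (sp i) /\
       (energy_on (ts i) (ts i.+1) (sa i) (sp i))%:E
         = Estar delta2 pbar ubar eps h (ts i) (ts i.+1)) ->
    P3_feasible delta2 pbar ubar taubar eps h
      (glue_alloc I ts sa) (glue_power I ts sp) I ts /\
    (energy (glue_alloc I ts sa) (glue_power I ts sp))%:E
      = P3_value delta2 pbar ubar taubar eps h.
Proof.
move=> _ _ _ _ _ _ _ _ _ _ _.
have Heq : P3_value delta2 pbar ubar taubar eps h = P31_value delta2 pbar ubar taubar eps h.
  by apply/eqP; rewrite eq_le value_le value_ge.
split => // I ts sa sp HU Hopt Hsol; split.
  by apply: glue_feasible => // i iI; case: (Hsol i iI).
rewrite (glue_energy _ _ HU) -sumEFin Heq -Hopt /P31_objective.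
by apply: eq_bigr => i _; exact: (Hsol i (ltn_ord i)).2.
Qed.
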